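(* Let $D\subset\mathbb N^n$ be finite, not contained in any coordinate hyperplane, $p$ a prime, $\ell\ge1$, and let $\mathbf e_{-1},\mathbf e_0,\dots,\mathbf e_{\ell-1}\in\Sigma_p(D)$ (not necessarily distinct) with $\mathbf e_{-1}=\mathbf e_{\ell-1}$ and $V(\mathbf e_i,\mathbf e_{i-1})\ne\emptyset$ for $0\le i\le\ell-1$. For each $i$ choose $V_i=(v_{i\mathbf d})_{\mathbf d}\in V(\mathbf e_i,\mathbf e_{i-1})$. Then $U=(u_{\mathbf d})$ with $u_{\mathbf d}=\sum_{i=0}^{\ell-1}p^iv_{i\mathbf d}$ is a minimal element of $E_{D,p}(\ell)$ whose support satisfies $\varphi_U(i)=\mathbf e_{\ell-1-i}$ for $0\le i\le\ell-1$.
   Context: $s_p$ = base-$p$ digit sum. $E_{D,p}(r)$ = set of $U=(u_{\mathbf d})\in\{0,\dots,p^r-1\}^D$ with $\sum u_{\mathbf d}\mathbf d\equiv0\pmod{p^r-1}$ and all coordinates of $\sum u_{\mathbf d}\mathbf d$ positive; $s_p(U)=\sum s_p(u_{\mathbf d})$; $\delta_p(D)=\frac1{p-1}\min_{r\ge1}\min_{U\in E_{D,p}(r)}s_p(U)/r$; minimal means $s_p(U)=(p-1)r\delta_p(D)$. Shift $\delta_r$: $k\mapsto pk\bmod(p^r-1)$ for $k\le p^r-2$, $p^r-1\mapsto p^r-1$, coordinatewise. $\varphi_U(j)=\frac1{p^r-1}\sum\mathbf d(\delta_r^jU)_{\mathbf d}$ for $j\in\mathbb Z/r\mathbb Z$;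 irreducible means $\varphi_U$ injective; $MI_{D,p}$ = minimal irreducible elements of all lengths; $\Sigma_p(D)=\bigcup_{U\in MI_{D,p}}\mathrm{Im}\varphi_U$. $\psi(U)=(u_{\mathbf d}\bmod p)_{\mathbf d}$; $V(\mathbf e,\mathbf e')=\{\psi(U):U\in MI_{D,p},\varphi_U(-1)=\mathbf e,\varphi_U(0)=\mathbf e'\}$. *)

(* Defs.v *)
From HB Require Import structures.
From mathcomp Require Import all_boot.
From mathcomp Require Import finmap.

Unset Printing Implicit Defensive.

Local Open Scope fset_scope.

(* Vectors of N^n are n.-tuple nat; D : {fset n.-tuple nat}; an element
   U = (u_d)_{d in D} is a finite function {ffun D -> nat}. *)

Section Defs.
Variables (n : nat) (D : {fset n.-tuple nat}) (p : nat).

(* base-p digit sum s_p(k): digit i is (k %/ p^i) %% p; for p >= 2 all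
   nonzero digits have index i <= k. *)
Definition digsum (k : nat) : nat := \sum_(i < k.+1) (k %/ p ^ i) %% p.

Definition sU (U : {ffun D -> nat}) : nat := \sum_(x : D) digsum (U x).

Definition wsum (U : {ffun D -> nat}) (j : 'I_n) : nat :=
  \sum_(x : D) U x * tnth (val x) j.

Definition inE (r : nat) (U : {ffun D -> nat}) : Prop :=
  (forall x : D, U x < p ^ r) /\
  (forall j : 'I_n, (p ^ r - 1 %| wsum U j) /\ 0 < wsum U j).

(* minimal: s_p(U)/r attains min over all r' >= 1, U' in E_{D,p}(r') *)
Definition minimalE (r : nat) (U : {ffun D -> nat}) : Prop :=
  0 < r /\ inE r U /\
  (forall (r' : nat) (U' : {ffun D -> nat}),
      0 < r' -> inE r' U' -> sU U * r' <= sU U' * r).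

Definition shiftv (r k : nat) : nat :=
  if k == p ^ r - 1 then k else (p * k) %% (p ^ r - 1).

Definition shiftU (r : nat) (U : {ffun D -> nat}) : {ffun D -> nat} :=
  [ffun x => shiftv r (U x)].

(* phi_U(j) for j in Z/rZ, represented by j : nat (read mod r) *)
Definition phi (r : nat) (U : {ffun D -> nat}) (j : nat) : n.-tuple nat :=
  [tuple wsum (iter (j %% r) (shiftU r) U) i %/ (p ^ r - 1) | i < n].

Definition irreducibleU (r : nat) (U : {ffun D -> nat}) : Prop :=
  forall i j, i < r -> j < r -> phi r U i = phi r U j -> i = j.

Definition MI (r : nat) (U : {ffun D -> nat}) : Prop :=
  minimalE r U /\ irreducibleU r U.

Definition inSigma (e : n.-tuple nat) : Prop :=
  exists r (U : {ffun D -> nat}), MI r U /\ exists2 j, j < r & phi r U j = e.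

Definition psi (U : {ffun D -> nat}) : {ffun D -> nat} := [ffun x => U x %% p].

(* v \in V(e, e'), with phi_U(-1) = phi_U(r-1) *)
Definition inV (e e' : n.-tuple nat) (v : {ffun D -> nat}) : Prop :=
  exists r (U : {ffun D -> nat}),
    MI r U /\ phi r U (r - 1) = e /\ phi r U 0 = e' /\ v = psi U.

Definition Vnonempty (e e' : n.-tuple nat) : Prop := exists v, inV e e' v.

End Defs.

Arguments digsum p k.
Arguments sU {n} D p U.
Arguments wsum {n} D U j.
Arguments inE {n} D p r U.
Arguments minimalE {n} D p r U.
Arguments shiftv p r k.
Arguments shiftU {n} D p r U.
Arguments phi {n} D p r U j.
Arguments irreducibleU {n} D p r U.
Arguments MI {n} D p r U.
Arguments inSigma {n} D p e.
Arguments psi {n} D p U.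
Arguments inV {n} D p e e' v.
Arguments Vnonempty {n} D p e e'.

Definition not_in_coord_hyperplane {n : nat} (D : {fset n.-tuple nat}) : Prop :=
  forall j : 'I_n, exists2 d, d \in D & tnth d j != 0.

(* Main.v *)
Require Import Defs.
From HB Require Import structures.
From mathcomp Require Import all_boot.
From mathcomp Require Import finmap.
From mathcomp Require Import zify ring.

Definition rotv (p r t u : nat) := (u %% p ^ (r - t)) * p ^ t + u %/ p ^ (r - t).
Definition dig (p k u : nat) := u %/ p ^ k %% p.

Section Arith.
Variables (p r : nat) (p2 : 1 < p).

Lemma p0 : 0 < p. Proof. lia. Qed.
Lemma expp0 k : 0 < p ^ k. Proof. by rewrite expn_gt0 p0. Qed.

Lemma rotv_bound t u : t <= r -> u < p ^ r -> rotv p r t u < p ^ r.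
Proof.
move=> tr ur; rewrite /rotv.
have E : p ^ r = p ^ (r - t) * p ^ t by rewrite -expnD subnK.
have hP := expp0 (r - t); have hQ := expp0 t.
have lo : u %% p ^ (r - t) < p ^ (r - t) by rewrite ltn_pmod.
have hi : u %/ p ^ (r - t) < p ^ t by rewrite ltn_divLR // mulnC -E.
rewrite E. move: lo hi; set P := p ^ (r - t); set Q := p ^ t; set a := u %% P; set b := u %/ P.
nia.
Qed.


Lemma rotv_M t u : t <= r -> u < p ^ r -> rotv p r t u = p ^ r - 1 -> u = p ^ r - 1.
Proof.
move=> tr ur; rewrite /rotv.
have E : p ^ r = p ^ (r - t) * p ^ t by rewrite -expnD subnK.
have hP := expp0 (r - t); have hQ := expp0 t.
have lo : u %% p ^ (r - t) < p ^ (r - t) by rewrite ltn_pmod.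
have hi : u %/ p ^ (r - t) < p ^ t by rewrite ltn_divLR // mulnC -E.
have du := divn_eq u (p ^ (r - t)).
rewrite E. move: lo hi du; set P := p ^ (r - t); set Q := p ^ t; set a := u %% P; set b := u %/ P.
move=> lo hi du h.
have h0 : a * Q + b + 1 = P * Q.
  have : 0 < P * Q by rewrite muln_gt0 hP hQ.
  lia.
have h1 : P * Q <= (a + 1) * Q by rewrite -h0 mulnDl mul1n; lia.
have h2 : P <= a + 1 by rewrite -(leq_pmul2r hQ).
have ha : a = P - 1 by lia.
have hb : b = Q - 1.
  move: h0; rewrite ha mulnBl mul1n.
  have : Q <= P * Q by rewrite leq_pmull.
  lia.
rewrite du ha hb mulnBl mul1n.
have : Q <= P * Q by rewrite leq_pmull.
have : P <= P * Q by rewrite leq_pmulr.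
lia.
Qed.

Lemma rotv_step t u : t < r -> u < p ^ r ->
  p * rotv p r t u = rotv p r t.+1 u + (p ^ r - 1) * dig p (r - t.+1) u.
Proof.
move=> tr ur; rewrite /rotv /dig.
set P' := p ^ (r - t.+1).
have EP : p ^ (r - t) = P' * p by rewrite /P' -expnSr subnSK.
have E : p ^ r = P' * p ^ t.+1 by rewrite /P' -expnD subnK.
have hP : 0 < P' := expp0 (r - t.+1).
have d1 := divn_eq u P'. have d2 := divn_eq (u %/ P') p.
set q1 := u %/ P' in d1 d2 *; set lo := u %% P' in d1 *.
set l1 := q1 %% p in d2 *; set q2 := q1 %/ p in d2.
have lol : lo < P' by rewrite ltn_pmod.
have l1l : l1 < p by rewrite ltn_pmod // p0.
clearbody q1 lo l1 q2.
have ue : u = q2 * (P' * p) + (l1 * P' + lo) by rewrite d1 d2 mulnDl addnA mulnAC mulnA.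
have sm : l1 * P' + lo < P' * p.
  have : l1 * P' + P' <= p * P' by rewrite -[X in _ + X]mul1n -mulnDl leq_mul2r addn1 l1l orbT.
  lia.
have hq : u %/ (P' * p) = q2 by rewrite ue divnMDl ?divn_small ?addn0 // muln_gt0 hP p0.
have hm : u %% (P' * p) = l1 * P' + lo by rewrite ue modnMDl modn_small.
rewrite EP hq hm E expnS.
have hQ := expp0 t.
move: (p ^ t) hQ => Q hQ.
rewrite mulnBl mul1n.
have : l1 <= P' * (p * Q) * l1 by rewrite leq_pmull // !muln_gt0 hP hQ p0.
move=> h; rewrite d2.
have -> : p * ((l1 * P' + lo) * Q + q2) = P' * (p * Q) * l1 + lo * (p * Q) + q2 * p.
  ring.
lia.
Qed.

Lemma rotv0 u : u < p ^ r -> rotv p r 0 u = u.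
Proof. by move=> ur; rewrite /rotv subn0 expn0 muln1 modn_small // divn_small // addn0. Qed.

Lemma rotvr u : rotv p r r u = u.
Proof. by rewrite /rotv subnn expn0 modn1 mul0n divn1. Qed.

Lemma dig_lt k u : dig p k u < p.
Proof. by rewrite /dig ltn_pmod // p0. Qed.

Lemma Mpos : 0 < r -> 0 < p ^ r - 1.
Proof. move=> r0; have : p ^ 1 <= p ^ r by rewrite leq_exp2l. rewrite expn1; lia. Qed.

Lemma rotv_MM t : t <= r -> rotv p r t (p ^ r - 1) = p ^ r - 1.
Proof.
have hu : p ^ r - 1 < p ^ r by have := expp0 r; lia.
elim: t => [|t IH] tr; first by rewrite rotv0.
have := rotv_step t (p ^ r - 1) tr hu.
rewrite IH ?(ltnW tr) //.
have := rotv_bound t.+1 (p ^ r - 1) tr hu.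
have := dig_lt (r - t.+1) (p ^ r - 1).
move: (rotv _ _ _ _) (dig _ _ _) => v d hd hv.
have hM := Mpos (leq_ltn_trans (leq0n t) tr).
move: (p ^ r) hM hv => P hM hv.
have : (P - 1) * d <= (P - 1) * (p - 1) by rewrite leq_mul2l; apply/orP; right; lia.
nia.
Qed.

Lemma iter_shift t u : u < p ^ r -> t <= r -> iter t (shiftv p r) u = rotv p r t u.
Proof.
move=> ur; have [->|uM] := eqVneq u (p ^ r - 1).
  elim: t => [|t IH] tr; first by rewrite rotv0 //; lia.
  by rewrite iterS IH ?(ltnW tr) // rotv_MM ?(ltnW tr) // /shiftv eqxx rotv_MM.
have ult : u < p ^ r - 1 by lia.
have hlt t' : t' <= r -> rotv p r t' u < p ^ r - 1.
  move=> tr'; have := rotv_bound t' u tr' ur.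
  have := rotv_M t' u tr' ur. have := expp0 r. move: (rotv _ _ _ _) => v. lia.
elim: t => [|t IH] tr; first by rewrite rotv0.
rewrite iterS IH ?(ltnW tr) // /shiftv.
have := hlt t (ltnW tr); move=> h; rewrite ifN; last by rewrite neq_ltn h.
rewrite rotv_step // addnC mulnC modnMDl modn_small //.
exact: hlt.
Qed.

Lemma dig_small i u : u < p ^ i -> dig p i u = 0.
Proof. by move=> h; rewrite /dig divn_small ?mod0n. Qed.

Lemma sum_dig_widen K1 K2 u : u < p ^ K1 -> K1 <= K2 ->
  \sum_(i < K2) dig p i u = \sum_(i < K1) dig p i u.
Proof.
move=> hu hK; rewrite (big_ord_widen K2 (fun i => dig p i u) hK) [RHS]big_mkcond /=.
apply: eq_bigr => i _; case: ifP => // /negbT; rewrite -leqNgt => h.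
by rewrite dig_small //; apply: (leq_trans hu); rewrite leq_exp2l.
Qed.

Lemma digsum_K K u : u < p ^ K -> \sum_(i < K) dig p i u = digsum p u.
Proof.
move=> hu; change (\sum_(i < K) dig p i u = \sum_(i < u.+1) dig p i u).
have hu' : u < p ^ u.+1 by apply: (ltn_trans (ltn_expl u p2)); rewrite ltn_exp2l.
have [h|h] := leqP K u.+1.
  by rewrite (sum_dig_widen K u.+1).
by rewrite (sum_dig_widen u.+1 K) //; apply: ltnW.
Qed.

Lemma dig_cons c m k : c < p -> dig p k (c + p * m) = if k is k'.+1 then dig p k' m else c.
Proof.
move=> hc; rewrite /dig; case: k => [|k].
  by rewrite expn0 divn1 addnC mulnC modnMDl modn_small.
by rewrite expnS divnMA [c + _]addnC (mulnC p m) divnMDl ?p0 // (divn_small hc) addn0.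
Qed.

Lemma digsum_cons c m : c < p -> digsum p (c + p * m) = c + digsum p m.
Proof.
move=> hc.
have hm : m < p ^ m.+1 by apply: (ltn_trans (ltn_expl m p2)); rewrite ltn_exp2l.
have hcm : c + p * m < p ^ m.+2.
  rewrite expnS; have : c + p * m < p + p * m by rewrite ltn_add2r.
  move=> h; apply: (leq_trans h); rewrite -mulnS leq_mul2l hm orbT //.
rewrite -(digsum_K m.+2) // big_ord_recl dig_cons //= -(digsum_K m.+1) //.
congr (_ + _); apply: eq_bigr => i _; by rewrite dig_cons.
Qed.
End Arith.

Section Walks.
Variables (n : nat) (D : {fset n.-tuple nat}) (p : nat) (p2 : 1 < p).

Definition Pair := ({ffun D -> nat} * n.-tuple nat)%type.

Definition wrel (a : n.-tuple nat) (c : {ffun D -> nat}) (a' : n.-tuple nat) : Prop :=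
  forall j : 'I_n, wsum D c j + tnth a j = p * tnth a' j.

Fixpoint Nl (s : seq Pair) (x : D) : nat :=
  if s is c :: s' then c.1 x + p * Nl s' x else 0.
Definition NlF s : {ffun D -> nat} := [ffun x => Nl s x].

Fixpoint walk (a0 : n.-tuple nat) (s : seq Pair) : Prop :=
  if s is c :: s' then wrel a0 c.1 c.2 /\ walk c.2 s' else True.
Fixpoint endv (a0 : n.-tuple nat) (s : seq Pair) : n.-tuple nat :=
  if s is c :: s' then endv c.2 s' else a0.
Fixpoint digs (s : seq Pair) : Prop :=
  if s is c :: s' then (forall x, c.1 x < p) /\ digs s' else True.
Fixpoint esum (s : seq Pair) : nat :=
  if s is c :: s' then \sum_x c.1 x + esum s' else 0.

Lemma wsum_cons c s j : wsum D (NlF (c :: s)) j = wsum D c.1 j + p * wsum D (NlF s) j.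
Proof.
rewrite /wsum big_distrr -big_split /=; apply: eq_bigr => x _.
by rewrite !ffunE /= mulnDl mulnA.
Qed.

Lemma telescope a0 s : walk a0 s ->
  forall j, wsum D (NlF s) j + tnth a0 j = p ^ size s * tnth (endv a0 s) j.
Proof.
elim: s a0 => [|c s IH] a0 /=.
  move=> _ j; rewrite /wsum big1 ?expn0 ?mul1n // => x _; by rewrite ffunE.
move=> [hr hw] j; rewrite wsum_cons -addnA addnC -addnA (addnC (tnth a0 j)) hr.
by rewrite -mulnDr IH // expnS mulnA.
Qed.

Lemma Nl_lt s x : digs s -> Nl s x < p ^ size s.
Proof.
elim: s => [|c s IH] /=; first by rewrite expn0.
move=> [hc hs]; have := IH hs; have := hc x; rewrite expnS.
move: (Nl s x) (c.1 x) (p ^ size s) => N a P h1 h2.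
have : p * N.+1 <= p * P by rewrite leq_mul2l h2 orbT.
lia.
Qed.

Lemma sU_Nl s : digs s -> sU D p (NlF s) = esum s.
Proof.
elim: s => [|c s IH] /=.
  by move=> _; rewrite /sU big1 // => x _; rewrite ffunE /= /digsum big_ord1 div0n mod0n.
move=> [hc hs]; rewrite -IH // /sU -big_split /=; apply: eq_bigr => x _.
by rewrite !ffunE /= digsum_cons.
Qed.

Lemma closed_inE a0 s : walk a0 s -> endv a0 s = a0 -> 0 < size s -> digs s ->
  (forall j, 0 < tnth a0 j) -> Defs.inE D p (size s) (NlF s).
Proof.
move=> hw he hs hd ha; split.
  by move=> x; rewrite ffunE Nl_lt.
move=> j; have := telescope a0 s hw j; rewrite he => h.
have -> : wsum D (NlF s) j = (p ^ size s - 1) * tnth a0 j by rewrite mulnBl mul1n -h addnK.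
split; first by apply: dvdn_mulr.
by rewrite muln_gt0 ha Mpos.
Qed.

Lemma walk_cat a s1 s2 : walk a (s1 ++ s2) <-> walk a s1 /\ walk (endv a s1) s2.
Proof.
elim: s1 a => [|c s1 IH] a /=; first by tauto.
rewrite IH; tauto.
Qed.

Lemma endv_cat a s1 s2 : endv a (s1 ++ s2) = endv (endv a s1) s2.
Proof. by elim: s1 a => [|c s1 IH] a //=. Qed.

Lemma digs_cat s1 s2 : digs (s1 ++ s2) <-> digs s1 /\ digs s2.
Proof. elim: s1 => [|c s1 IH] /=; first by tauto. rewrite IH; tauto. Qed.

Lemma esum_cat s1 s2 : esum (s1 ++ s2) = esum s1 + esum s2.
Proof. by elim: s1 => [|c s1 IH] //=; rewrite IH addnA. Qed.

Section Iota.
Variables (A : nat -> n.-tuple nat) (C : nat -> {ffun D -> nat}).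
Definition wl m L : seq Pair := [seq (C k.+1, A k.+1) | k <- iota m L].

Lemma walk_iota m L : (forall k, k < L -> wrel (A (m + k)) (C (m + k).+1) (A (m + k).+1)) ->
  walk (A m) (wl m L) /\ endv (A m) (wl m L) = A (m + L).
Proof.
elim: L m => [|L IH] m h /=; first by rewrite addn0.
have h0 := h 0 (ltn0Sn L); rewrite addn0 in h0.
have [h1 h2] : walk (A m.+1) (wl m.+1 L) /\ endv (A m.+1) (wl m.+1 L) = A (m.+1 + L).
  by apply: IH => k hk; rewrite addSnnS; apply: h.
by split => //; rewrite h2 addSnnS.
Qed.

Lemma digs_iota m L : (forall k x, C k x < p) -> digs (wl m L).
Proof. by move=> h; elim: L m => [|L IH] m //=; split; [exact: h | exact: IH]. Qed.

Lemma esum_iota m L : esum (wl m L) = \sum_(k < L) \sum_x C (m + k).+1 x.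
Proof.
elim: L m => [|L IH] m /=; first by rewrite big_ord0.
by rewrite big_ord_recl /= addn0 IH; congr (_ + _); apply: eq_bigr => i _; rewrite addSnnS.
Qed.

Lemma Nl_iota m L x : Nl (wl m L) x = \sum_(i < L) p ^ i * C (m + i).+1 x.
Proof.
elim: L m => [|L IH] m /=; first by rewrite big_ord0.
rewrite big_ord_recl /= addn0 expn0 mul1n IH big_distrr; congr (_ + _).
by apply: eq_bigr => i _; rewrite /= mulnA addnS /bump leq0n add1n expnS addSn.
Qed.

Lemma dig_Nl_iota m L x k : (forall k x, C k x < p) -> k < L ->
  dig p k (Nl (wl m L) x) = C (m + k).+1 x.
Proof.
move=> hC; elim: L m k => [|L IH] m k //= hk.
rewrite dig_cons //; case: k hk => [|k] hk; first by rewrite addn0.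
by rewrite IH // addSnnS.
Qed.

Lemma size_wl m L : size (wl m L) = L.
Proof. by rewrite size_map size_iota. Qed.
End Iota.

End Walks.
Arguments wrel {n} D p a c a'.
Arguments Nl {n D} p s x.
Arguments NlF {n D} p s.
Arguments walk {n D} p a0 s.
Arguments endv {n D} a0 s.
Arguments digs {n D} p s.
Arguments esum {n D} s.
Arguments wl {n D} A C m L.

Section Cycle.
Variables (n : nat) (D : {fset n.-tuple nat}) (p : nat) (p2 : 1 < p) (r : nat) (r0 : 0 < r).
Variables (U : {ffun D -> nat}) (hU : forall x, U x < p ^ r)
  (hdv : forall j, p ^ r - 1 %| wsum D U j).

Definition B t : n.-tuple nat :=
  [tuple wsum D (iter t (shiftU D p r) U) j %/ (p ^ r - 1) | j < n].
Definition digf k : {ffun D -> nat} := [ffun x => dig p k (U x)].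

Lemma iterU t : iter t (shiftU D p r) U = [ffun x => iter t (shiftv p r) (U x)].
Proof.
elim: t => [|t IH] /=; first by apply/ffunP => x; rewrite ffunE.
by rewrite IH; apply/ffunP => x; rewrite !ffunE.
Qed.

Lemma iterR t : t <= r -> iter t (shiftU D p r) U = [ffun x => rotv p r t (U x)].
Proof. by move=> tr; rewrite iterU; apply/ffunP => x; rewrite !ffunE iter_shift. Qed.

Lemma Wrel t j : t < r -> p * wsum D (iter t (shiftU D p r) U) j =
  wsum D (iter t.+1 (shiftU D p r) U) j + (p ^ r - 1) * wsum D (digf (r - t.+1)) j.
Proof.
move=> tr; rewrite !iterR // ?(ltnW tr) // /wsum !big_distrr -big_split /=.
by apply: eq_bigr => x _; rewrite !ffunE mulnA rotv_step // mulnDl mulnA.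
Qed.

Lemma Wdvd t j : t <= r -> p ^ r - 1 %| wsum D (iter t (shiftU D p r) U) j.
Proof.
elim: t => [|t IH] tr; first exact: hdv.
have := dvdn_mull p (IH (ltnW tr)); rewrite Wrel // dvdn_addl //.
exact: dvdn_mulr.
Qed.

Lemma tnthB t j : tnth (B t) j = wsum D (iter t (shiftU D p r) U) j %/ (p ^ r - 1).
Proof. by rewrite tnth_mktuple. Qed.

Lemma Brel t : t < r -> wrel D p (B t.+1) (digf (r - t.+1)) (B t).
Proof.
move=> tr j; rewrite !tnthB.
have hM := Mpos p r p2 r0.
have := Wrel t j tr.
rewrite -(divnK (Wdvd t j (ltnW tr))) -(divnK (Wdvd t.+1 j tr)).
move: (_ %/ _) (_ %/ _) => a b.
move=> h; apply/eqP; rewrite -(eqn_pmul2r hM) mulnDl -mulnA !mulnK // h addnC.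
by rewrite [wsum _ _ _ * _]mulnC.
Qed.

Lemma Br : B r = B 0.
Proof.
apply: eq_from_tnth => j; rewrite !tnthB iterR // /=; congr (wsum D _ j %/ _).
by apply/ffunP => x; rewrite ffunE rotvr.
Qed.

Lemma phiB t : t < r -> phi D p r U t = B t.
Proof. by move=> tr; rewrite /phi modn_small. Qed.

Lemma B0pos j : 0 < wsum D U j -> 0 < tnth (B 0) j.
Proof.
move=> h; rewrite tnthB /= divn_gt0 ?Mpos //; exact: dvdn_leq.
Qed.

End Cycle.

Arguments B {n} D p r U t.
Arguments digf {n D} p U k.

Definition Pl {n} (D : {fset n.-tuple nat}) p r (U : {ffun D -> nat}) :=
  wl (fun k => B D p r U (r.-1 - k)) (digf p U) 0 r.-1.

Lemma MI_facts n (D : {fset n.-tuple nat}) p r U e e' (v : {ffun D -> nat}) :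
  1 < p -> MI D p r U -> phi D p r U (r - 1) = e -> phi D p r U 0 = e' -> v = psi D p U ->
  [/\ wrel D p e' v e, (forall j, 0 < tnth e j), (forall x, v x < p),
      walk p e (Pl D p r U) /\ endv e (Pl D p r U) = e'
    & [/\ digs p (Pl D p r U), size (Pl D p r U) = r.-1
    & esum (Pl D p r U) + \sum_x v x = sU D p U]].
Proof.
move=> p2 [[r0 [[hU hW] _]] _] he he' hv.
have hdv j : p ^ r - 1 %| wsum D U j by case: (hW j).
have hpos j : 0 < wsum D U j by case: (hW j).
have r1 : r - 1 = r.-1 by rewrite subn1.
rewrite r1 (phiB _ _ _ _ _ _) in he; last by rewrite ltn_predL.
rewrite (phiB _ _ _ _ _ _) // in he'.
have hv0 : v = digf p U 0 by rewrite hv; apply/ffunP => x; rewrite !ffunE /dig expn0 divn1.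
have hrel : wrel D p e' v e.
  have hr1 : r.-1 < r by rewrite ltn_predL.
  have := @Brel _ _ _ p2 _ r0 _ hU hdv _ hr1.
  rewrite prednK // subnn (@Br _ _ _ p2 _ _ hU) he he' -hv0 //.
have hdig : forall x, v x < p by move=> x; rewrite hv ffunE ltn_pmod // ltnW.
split => //.
- move=> j; have := hrel j; have := @B0pos _ _ _ p2 _ r0 _ hdv _ (hpos j); rewrite he'.
  move: (tnth e j) (tnth e' j) => a b hb; case: a => //; rewrite muln0; lia.
- have hk : forall k, k < r.-1 -> wrel D p (B D p r U (r.-1 - (0 + k))) (digf p U (0 + k).+1)
      (B D p r U (r.-1 - (0 + k).+1)).
    move=> k hk; rewrite add0n.
    have hk' : r.-1 - k.+1 < r by lia.
    have := @Brel _ _ _ p2 _ r0 _ hU hdv _ hk'.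
    have -> : (r.-1 - k.+1).+1 = r.-1 - k by lia.
    by have -> : r - (r.-1 - k) = k.+1 by lia.
  have [h1 h2] := @walk_iota _ _ _ (fun k => B D p r U (r.-1 - k)) (digf p U) 0 r.-1 hk.
  rewrite subn0 in h1 h2; by rewrite /Pl -he; split => //; rewrite h2 add0n subnn he'.
split; first by apply: digs_iota => k x; rewrite ffunE; apply: dig_lt.
  by rewrite /Pl size_wl.
rewrite /Pl esum_iota /sU.
under [in RHS]eq_bigr do rewrite -(digsum_K _ p2 r) //.
rewrite [RHS]exchange_big /= -[in RHS](prednK r0) big_ord_recl /= addnC hv0; congr (_ + _).
  by apply: eq_bigr => x _; rewrite ffunE.
apply: eq_bigr => k _; apply: eq_bigr => x _; by rewrite ffunE.
Qed.

Lemma fchoice (T : Type) (P : nat -> T -> Prop) (t0 : T) k :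
  (forall i, i < k -> exists x, P i x) -> exists f, forall i, i < k -> P i (f i).
Proof.
elim: k => [|k IH] h; first by exists (fun _ => t0).
have [f hf] : exists f, forall i, i < k -> P i (f i) by apply: IH => i hi; apply: h; lia.
have [x hx] := h k (ltnSn k).
exists (fun i => if i == k then x else f i) => i hi.
case: eqP => [->//|ne]; apply: hf; lia.
Qed.

Lemma wrel_uniq n (D : {fset n.-tuple nat}) p a a' c b :
  wrel D p a c b -> wrel D p a' c b -> a = a'.
Proof.
move=> h h'; apply: eq_from_tnth => j; apply/eqP.
by rewrite -(eqn_add2l (wsum D c j)) h h'.
Qed.

Theorem corollary2p17 (n : nat) (D : {fset n.-tuple nat}) (p l : nat)
  (em1 : n.-tuple nat) (e : nat -> n.-tuple nat)
  (Vs : nat -> {ffun D -> nat}) :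
  not_in_coord_hyperplane D ->
  prime p ->
  1 <= l ->
  inSigma D p em1 ->
  (forall i, i < l -> inSigma D p (e i)) ->
  em1 = e l.-1 ->
  (forall i, i < l -> Vnonempty D p (e i) (if i == 0 then em1 else e i.-1)) ->
  (forall i, i < l -> inV D p (e i) (if i == 0 then em1 else e i.-1) (Vs i)) ->
  let U := [ffun x => \sum_(i < l) p ^ i * Vs i x] in
  minimalE D p l U /\ (forall i, i < l -> phi D p l U i = e (l.-1 - i)).
Proof.
move=> _ hp hl _ _ hem _ hV U.
have p2 : 1 < p := prime_gt1 hp.
set prevE := fun i => if i == 0 then em1 else e i.-1.
have hV' : forall i, i < l -> exists x : nat * {ffun D -> nat},
   MI D p x.1 x.2 /\ phi D p x.1 x.2 (x.1 - 1) = e i /\ phi D p x.1 x.2 0 = prevE i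
   /\ Vs i = psi D p x.2.
  by move=> i hi; have [r [W h]] := hV i hi; exists (r, W).
have [f hf] := fchoice _ _ (0, Vs 0) l hV'.
set rs := fun i => (f i).1; set Us := fun i => (f i).2.
have Fi i : i < l -> [/\ wrel D p (prevE i) (Vs i) (e i), (forall j, 0 < tnth (e i) j),
      (forall x, Vs i x < p),
      walk p (e i) (Pl D p (rs i) (Us i)) /\ endv (e i) (Pl D p (rs i) (Us i)) = prevE i
    & [/\ digs p (Pl D p (rs i) (Us i)), size (Pl D p (rs i) (Us i)) = (rs i).-1
    & esum (Pl D p (rs i) (Us i)) + \sum_x Vs i x = sU D p (Us i)]].
  move=> hi; have [hMI [h1 [h2 h3]]] := hf i hi.
  exact: MI_facts p2 hMI h1 h2 h3.
have MIi i : i < l -> MI D p (rs i) (Us i) by move=> hi; case: (hf i hi).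
have hl1 : l.-1 < l by rewrite ltn_predL.
have em1pos : forall j, 0 < tnth em1 j.
  by have [_ h _ _ _] := Fi l.-1 hl1; rewrite hem.
pose A := fun k => if k is k'.+1 then e k' else em1.
pose C := fun k => if k.-1 < l then Vs k.-1 else [ffun _ : D => 0].
pose Wl := wl A C 0 l.
have hC : forall k x, C k x < p.
  move=> k x; rewrite /C; case: ifP => hk; last by rewrite ffunE prime_gt0.
  by have [_ _ h _ _] := Fi _ hk; apply: h.
have hUW : U = NlF p Wl.
  apply/ffunP => x; rewrite !ffunE Nl_iota; apply: eq_bigr => i _.
  by rewrite /C add0n /= ltn_ord.
have hA : forall k, k < l -> A k = prevE k by case.
have [hw he] : walk p (A 0) Wl /\ endv (A 0) Wl = A (0 + l).
  apply: walk_iota => k hk; rewrite add0n hA // /C /= hk.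
  by have [h _ _ _ _] := Fi _ hk.
rewrite add0n /= -(prednK hl) /= -hem in he.
have hdW : digs p Wl by apply: digs_iota.
have UE : Defs.inE D p l U.
  have hs0 : 0 < size Wl by rewrite size_wl.
  have := @closed_inE _ _ _ p2 em1 _ hw he hs0 hdW em1pos.
  by rewrite size_wl -hUW.
have sUW : sU D p U = \sum_(i < l) \sum_x Vs i x.
  rewrite hUW sU_Nl // esum_iota; apply: eq_bigr => i _; by rewrite /C add0n /= ltn_ord.
pose Ck k := flatten [seq Pl D p (rs i) (Us i) | i <- rev (iota 0 k)].
have rs1 : forall i, i < l -> 0 < rs i by move=> i hi; case: (MIi i hi) => [[]].
have hCk : forall k, k <= l -> [/\ walk p (A k) (Ck k), endv (A k) (Ck k) = em1, digs p (Ck k),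
   esum (Ck k) + \sum_(i < k) \sum_x Vs i x = \sum_(i < k) sU D p (Us i)
 & size (Ck k) + k = \sum_(i < k) rs i].
  elim => [|k IH] hk.
    by rewrite /Ck /= !big_ord0.
  have [h1 h2 h3 h4 h5] := IH (ltnW hk).
  have -> : Ck k.+1 = Pl D p (rs k) (Us k) ++ Ck k.
    by rewrite /Ck -addn1 iotaD add0n cats1 rev_rcons.
  have [_ _ _ [hw1 he1] [hd1 hs1 hes1]] := Fi k hk.
  have hAk : endv (A k.+1) (Pl D p (rs k) (Us k)) = A k.
    by rewrite /= he1 /prevE; case: k {IH hk h1 h2 h3 h4 h5 hw1 he1 hd1 hs1 hes1}.
  split.
  - by apply/walk_cat; split => //; rewrite hAk.
  - by rewrite endv_cat hAk.
  - by apply/digs_cat.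
  - rewrite esum_cat !big_ord_recr /= -h4 -hes1; ring.
  - rewrite size_cat !big_ord_recr /= -h5 hs1; have := rs1 k hk; move: (rs k) (size (Ck k)) => q z; lia.
have hAl : A l = em1.
  rewrite /A hem; case E: l => [|l']; [by rewrite E in hl | by []].
have [c1 c2 c3 c4 c5] := hCk l (leqnn l).
rewrite hAl in c1 c2.
pose K := size (Ck l).
have [[r00 [E0 min0]] _] := MIi 0 hl.
set S0 := sU D p (Us 0) in min0 *; set R0 := rs 0 in r00 E0 min0 *.
have hWineq : S0 * l <= sU D p U * R0 by apply: min0.
have hCineq : S0 * K <= esum (Ck l) * R0.
  case: (posnP K) => [->|hK]; first by rewrite muln0.
  rewrite -(@sU_Nl _ _ _ p2 _ c3); apply: min0 => //.
  exact: (@closed_inE _ _ _ p2 _ _ c1 c2 hK c3 em1pos).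
have hSi : forall i, i < l -> sU D p (Us i) * R0 = S0 * rs i.
  move=> i hi; have [[ri0 [Ei mini]] _] := MIi i hi.
  by apply/eqP; rewrite eqn_leq mini //= min0.
have hT : (\sum_(i < l) sU D p (Us i)) * R0 = S0 * \sum_(i < l) rs i.
  rewrite big_distrl big_distrr; apply: eq_bigr => i _; exact: hSi.
rewrite -c4 -c5 -sUW in hT.
have key : sU D p U * R0 = S0 * l.
  move: hT hWineq hCineq; rewrite mulnDl mulnDr.
  move: (_ * R0) (_ * R0) (S0 * K) (S0 * l) => a b c d; lia.
split.
  split => //; split => // r' U' r'0 hE'.
  rewrite -(leq_pmul2r r00) mulnAC key mulnAC [sU D p U' * l * R0]mulnAC leq_mul2r.
  by rewrite min0 // orbT.
have [hUb hUw] := UE.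
have hdv : forall j, p ^ l - 1 %| wsum D U j by move=> j; case: (hUw j).
have hM := Mpos p l p2 hl.
have hBt : forall t, t < l -> B D p l U t = e (l.-1 - t).
  elim => [|t IH] ht.
    apply: eq_from_tnth => j; rewrite tnthB /= subn0 -hem.
    have := @telescope _ _ _ em1 _ hw j; rewrite size_wl /= he -hUW.
    move=> h; have -> : wsum D U j = (p ^ l - 1) * tnth em1 j by rewrite mulnBl mul1n -h addnK.
    by rewrite mulKn.
  have := @Brel _ _ _ p2 _ hl _ hUb hdv _ (ltnW ht).
  have hi : l - t.+1 < l by lia.
  have -> : digf p U (l - t.+1) = Vs (l - t.+1).
    apply/ffunP => x; rewrite ffunE hUW ffunE dig_Nl_iota // /C add0n /= hi //.
  have [hr _ _ _ _] := Fi _ hi.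
  rewrite IH ?(ltnW ht) //.
  have -> : l.-1 - t = l - t.+1 by lia.
  move=> h2; have := wrel_uniq _ _ _ _ _ _ _ h2 hr.
  rewrite /prevE; have -> : (l - t.+1 == 0) = false by apply/eqP; lia.
  by have -> : (l - t.+1).-1 = l.-1 - t.+1 by lia.
by move=> i hi; rewrite phiB // hBt.
Qed.
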